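(* Let $n$ be a positive integer with $\lambda^{3n/2}>2(1+\sqrt2)C_1$. Then $c_n>0$ and $$\big|\lambda^{n/2}-\sqrt{3\theta^2-p}\cdot c_n^{1/2}\big|<\frac{\sqrt2 C_1}{\lambda^n}.$$
   Context: Standing setup: $p,q\in\mathbb{Z}$ are such that $x^3-px-q$ is irreducible over $\mathbb{Q}$ with exactly one real root $\theta$ (one has $3\theta^2-4p>0$ and $3\theta^2-p>0$). $K=\mathbb{Q}(\theta)\subset\mathbb{R}$, $\mathcal{O}_K$ its ring of integers. $d$ is a positive integer with $\mathcal{O}_K\subseteq\frac1d\mathbb{Z}[\theta]$. $\lambda\in\mathcal{O}_K$ is a unit with $\lambda>1$. For $n\ge1$ the rationals $a_n,b_n,c_n$ are defined by $a_n+b_n\theta+c_n\theta^2=\lambda^n$, and $X_n=a_n+pc_n-b_n\theta$, $Y_n=a_n+pc_n-c_n\theta^2$, $Z_n=b_n\theta-c_n\theta^2$, $k_n=dc_n$. Constants: $C_1=\max\{\sqrt2,\ \frac{\sqrt2|\theta|}{\sqrt{3\theta^2-4p}}\}$, $C_2=\frac{\sqrt d}{\sqrt{3\theta^2-p}}$. *)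

(* Defs.v *)
From HB Require Import structures.
From mathcomp Require Import all_boot all_order all_algebra.
Set Implicit Arguments. Unset Strict Implicit. Unset Printing Implicit Defensive.
Import Order.TTheory GRing.Theory Num.Theory.
Local Open Scope ring_scope.

Definition alg_integer (R : numFieldType) (x : R) : Prop :=
  exists P : {poly int}, P \is monic /\ root (map_poly intr P) x.

Definition Kelt (R : numFieldType) (theta : R) (a b c : rat) : R :=
  ratr a + ratr b * theta + ratr c * theta ^+ 2.

Definition cubic (p q : int) : {poly rat} :=
  'X^3 - (p%:~R) *: 'X - (q%:~R)%:P.

Definition C1 (R : rcfType) (p : int) (theta : R) : R :=
  Num.max (Num.sqrt 2)
    (Num.sqrt 2 * `|theta| / Num.sqrt (3 * theta ^+ 2 - 4 * p%:~R)).

(* Main.v *)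
Require Import Defs.
From HB Require Import structures.
From mathcomp Require Import all_boot all_order all_algebra.
From mathcomp Require Import ring lra zify.
Import Order.TTheory GRing.Theory Num.Theory.
Local Open Scope ring_scope.

Definition trip := (rat * rat * rat)%type.
Definition KeltT (R : numFieldType) (t : R) (u : trip) := Kelt t u.1.1 u.1.2 u.2.
Arguments KeltT {R}.
Definition mulK (p q : int) (u v : trip) : trip :=
  let P : rat := p%:~R in let Q : rat := q%:~R in
  let: (a, b, c) := u in let: (a', b', c') := v in
  (a * a' + Q * (b * c' + c * b'),
   a * b' + b * a' + P * (b * c' + c * b') + Q * c * c',
   a * c' + b * b' + c * a' + P * c * c').
Definition Nr (p q : int) (u : trip) : rat :=
  let P : rat := p%:~R in let Q : rat := q%:~R in
  let: (a, b, c) := u in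
  c^+3*Q^+2 - b*c^+2*P*Q + b^+3*Q + a*c^+2*P^+2 - 3*a*b*c*Q - a*b^+2*P + 2*a^+2*c*P + a^+3.

Lemma Nr_mul p q u v : Nr p q (mulK p q u v) = Nr p q u * Nr p q v.
Proof. case: u => [[a b] c]; case: v => [[a' b'] c']; rewrite /Nr /mulK /=. ring. Qed.

Section S.
Variable R : rcfType.
Definition Qr (p : int) (t : R) (u : trip) : R :=
  let: (a0, b0, c0) := u in
  let a := ratr a0 in let b := ratr b0 in let c := ratr c0 in
  (a - b * t / 2 + c * (p%:~R - t^+2 / 2))^+2
  + (3 * t^+2 - 4 * p%:~R) / 4 * (b - c * t)^+2.

Lemma KeltT_mul (p q : int) (t : R) u v :
  t ^+ 3 - p%:~R * t - q%:~R = 0 ->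
  KeltT t (mulK p q u v) = KeltT t u * KeltT t v.
Proof.
move=> ht; case: u => [[a b] c]; case: v => [[a' b'] c'].
rewrite /KeltT /Kelt /mulK /=.
apply/eqP; rewrite -subr_eq0; apply/eqP.
rewrite !rmorphD !rmorphM /= !ratr_int.
set P : R := p%:~R; set Q : R := q%:~R.
transitivity (- (ratr b * ratr c' + ratr c * ratr b' + ratr c * ratr c' * t) * (t ^+ 3 - P * t - Q)).
  rewrite /P /Q; ring.
have h0 : t ^+ 3 - P * t - Q = 0 := ht.
by apply: (etrans (congr1 (fun z => _ * z) h0)); apply: mulr0.
Qed.

Lemma Nr_Kelt (p q : int) (t : R) u :
  t ^+ 3 - p%:~R * t - q%:~R = 0 ->
  ratr (Nr p q u) = KeltT t u * Qr p t u.
Proof.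
move=> ht; case: u => [[a0 b0] c0]; rewrite /KeltT /Kelt /Nr /Qr /=.
set a := ratr a0; set b := ratr b0; set c := ratr c0.
set P : R := p%:~R; set Q : R := q%:~R.
apply/eqP; rewrite -subr_eq0; apply/eqP.
rewrite /a /b /c.
transitivity ((t^+3 - P * t - Q) *
  ((a + b * t + c * t^+2) * (- c^+2 * t + b * c) -
   (c^+3*Q - c^+3*P*t - b*c^+2*P + b^+2*c*t + b^+3 - a*c^+2*t - 2*a*b*c))).
  by rewrite /P /Q; field.
have h0 : t ^+ 3 - P * t - Q = 0 := ht.
by apply: (etrans (congr1 (fun z => z * _) h0)); apply: mul0r.
Qed.
End S.
Arguments Qr {R}.
Section S1.
Variable R : rcfType.

Lemma ev_cubic (p q : int) (t : R) :
  (map_poly ratr (cubic p q)).[t] = t ^+ 3 - p%:~R * t - q%:~R.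
Proof.
rewrite /cubic rmorphB rmorphB /= map_polyXn map_polyZ map_polyX map_polyC /=.
by rewrite !hornerE !ratr_int.
Qed.

Lemma ev_quad (a b c : rat) (t : R) :
  (map_poly ratr (a%:P + b *: 'X + c *: 'X^2)).[t] = Kelt t a b c.
Proof.
rewrite rmorphD rmorphD /= map_polyZ map_polyZ map_polyX map_polyXn map_polyC /=.
by rewrite !(hornerD, hornerZ, hornerX, hornerXn, hornerC) /Kelt.
Qed.

Lemma root_dvd (p q : int) (t : R) (F : {poly rat}) :
  irreducible_poly (cubic p q) ->
  t ^+ 3 - p%:~R * t - q%:~R = 0 ->
  (map_poly ratr F).[t] = 0 -> cubic p q %| F.
Proof.
move=> irr ht hF; apply: contraT => nd.
have := irreducible_poly_coprime F irr; rewrite nd /= => /Bezout_coprimepP [u hu].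
have /size_poly1P [k k0 hk] : size (u.1 * cubic p q + u.2 * F) == 1.
  by rewrite (eqp_size hu) size_poly1.
have := congr1 (fun P => (map_poly (ratr : rat -> R) P).[t]) hk => /=.
rewrite rmorphD rmorphM rmorphM /= !hornerE ev_cubic ht hF map_polyC hornerC.
by move=> /esym /eqP; rewrite !mulr0 addr0 fmorph_eq0 (negbTE k0).
Qed.

Lemma kelt_uniq (p q : int) (t : R) (a b c : rat) :
  irreducible_poly (cubic p q) ->
  t ^+ 3 - p%:~R * t - q%:~R = 0 ->
  Kelt t a b c = 0 -> [/\ a = 0, b = 0 & c = 0].
Proof.
move=> irr ht hk.
set g : {poly rat} := a%:P + b *: 'X + c *: 'X^2.
have hg : g = 0.
  have hd := @root_dvd p q t g irr ht (etrans (ev_quad a b c t) hk).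
  apply: contraTeq hd => g0.
  apply/negP => /(dvdp_leq g0).
  have -> : size (cubic p q) = 4%N.
    rewrite /cubic -addrA size_polyDl size_polyXn //.
    rewrite -opprD size_polyN; apply: (leq_ltn_trans (size_polyD _ _)).
    rewrite gtn_max size_polyC (leq_ltn_trans (size_scale_leq _ _)) ?size_polyX //; by case: (_ != 0).
  have : (size g <= 3)%N.
    rewrite /g; apply: (leq_trans (size_polyD _ _)); rewrite geq_max.
    rewrite (leq_trans (size_scale_leq _ _)) ?size_polyXn ?andbT //.
    apply: (leq_trans (size_polyD _ _)); rewrite geq_max size_polyC (leq_trans (leq_b1 _)) //=.
    by rewrite (leq_trans (size_scale_leq _ _)) ?size_polyX.
  by move=> h1 h2; have := leq_trans h2 h1.
have := congr1 (fun P : {poly rat} => P`_0) hg.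
have := congr1 (fun P : {poly rat} => P`_1) hg.
have := congr1 (fun P : {poly rat} => P`_2) hg.
rewrite /g !coefD !coefZ !coefC !coefX !coefXn /= ?coef0.
by rewrite !mulr0 !mulr1 !addr0 !add0r => -> -> ->.
Qed.
End S1.
Lemma bounded_den_int (r : rat) (D : nat) : (0 < D)%N ->
  (forall k : nat, (D%:R * r ^+ k : rat) \is a Num.int) -> r \is a Num.int.
Proof.
move=> D0 H; rewrite Qint_def.
have dvd : forall k, (`|denq r| ^ k %| D)%N.
  move=> k; have /intrP [m hm] := H k.
  have e : (D%:Z * numq r ^+ k = m * denq r ^+ k)%R.
    apply: (@intr_inj rat); rewrite !rmorphM !rmorphXn /= numqE -hm.
    by rewrite exprMn mulrA.
  have e2 := congr1 absz e; rewrite !abszM !abszX /= in e2.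
  have : (`|denq r| ^ k %| D * `|numq r| ^ k)%N by rewrite e2 dvdn_mull.
  rewrite Gauss_dvdl //; apply: coprimeXl; apply: coprimeXr.
  by rewrite coprime_sym coprime_num_den.
have /dvdn_leq := dvd D; rewrite D0 => /(_ isT) hle.
have dpos : (0 < `|denq r|)%N by rewrite absz_gt0 gt_eqF ?denq_gt0.
case: (ltngtP `|denq r| 1) => h.
- by move: dpos; rewrite ltnNge -ltnS h.
- by move: hle; rewrite leqNgt ltn_expl.
- apply/eqP; have : (0 < denq r)%R by exact: denq_gt0.
  by case: (denq r) h => // n /= ->.
Qed.
Lemma common_den (f : nat -> rat) m : exists D : nat, (0 < D)%N /\
  forall j, (j < m)%N -> (D%:R * f j) \is a Num.int.
Proof.
elim: m => [|m [D [D0 HD]]]; first by exists 1%N.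
exists (D * `|denq (f m)|)%N; split.
  by rewrite muln_gt0 D0 absz_gt0 gt_eqF ?denq_gt0.
move=> j; rewrite ltnS leq_eqVlt => /orP [/eqP ->|jm].
  have -> : (D * `|denq (f m)|)%:R * f m = D%:R * (numq (f m))%:~R :> rat.
    rewrite natrM numqE natr_absz gtr0_norm ?denq_gt0 //; ring.
  by rewrite rpredM ?natr_int ?intr_int.
by rewrite natrM mulrAC rpredM ?natr_int ?HD.
Qed.

Definition powK (p q : int) (u : trip) (k : nat) : trip := iter k (mulK p q u) (1, 0, 0).

Lemma Nr_pow p q u k : Nr p q (powK p q u k) = Nr p q u ^+ k.
Proof.
elim: k => [|k IH]; first by rewrite /powK /= /Nr; ring.
by rewrite /powK iterS -/(powK p q u k) Nr_mul IH exprS.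
Qed.

Lemma KeltT_pow (R : rcfType) (p q : int) (t : R) u k :
  t ^+ 3 - p%:~R * t - q%:~R = 0 ->
  KeltT t (powK p q u k) = KeltT t u ^+ k.
Proof.
move=> ht; elim: k => [|k IH].
  by rewrite /powK /= /KeltT /Kelt /= !rmorph0 rmorph1 !mul0r !addr0.
by rewrite /powK iterS -/(powK p q u k) KeltT_mul // IH exprS.
Qed.

Lemma Nr_int p q a b c : a \is a Num.int -> b \is a Num.int -> c \is a Num.int ->
  Nr p q (a, b, c) \is a Num.int.
Proof.
move=> ha hb hc; rewrite /Nr.
have hp : (p%:~R : rat) \is a Num.int by apply: intr_int.
have hq : (q%:~R : rat) \is a Num.int by apply: intr_int.
by rewrite ?(rpredD, rpredB, rpredM, rpredX, rpredN, rpred_nat, natr_int).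
Qed.

Lemma Kelt_sub (R : numFieldType) (t : R) a b c a' b' c' :
  Kelt t (a - a') (b - b') (c - c') = Kelt t a b c - Kelt t a' b' c'.
Proof. by rewrite /Kelt !rmorphB /=; ring. Qed.

Lemma int_norm (R : rcfType) (p q : int) (t : R) (u : trip) :
  irreducible_poly (cubic p q) ->
  t ^+ 3 - p%:~R * t - q%:~R = 0 ->
  alg_integer (KeltT t u) ->
  exists D : nat, (0 < D)%N /\ forall k, (D%:R ^+ 3 * Nr p q u ^+ k : rat) \is a Num.int.
Proof.
move=> irr ht [P [mP hP]].
set m := size P.
have [D1 [D10 H1]] := common_den (fun j => (powK p q u j).1.1) m.
have [D2 [D20 H2]] := common_den (fun j => (powK p q u j).1.2) m.
have [D3 [D30 H3]] := common_den (fun j => (powK p q u j).2) m.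
exists (D1 * D2 * D3)%N; split; first by rewrite !muln_gt0 D10 D20 D30.
move=> k; set x := KeltT t u.
set r := 'X^k %% P.
have hr : (size r < m)%N by rewrite /r ltn_modp monic_neq0.
have exk : x ^+ k = \sum_(j < m) (r`_j)%:~R * x ^+ j.
  have e := Pdiv.IdomainMonic.divp_eq mP 'X^k.
  have := congr1 (fun Q : {poly int} => (map_poly (intr : int -> R) Q).[x]) e => /=.
  rewrite map_polyXn hornerXn rmorphD rmorphM /= hornerD hornerM.
  move/rootP: hP => ->; rewrite mulr0 add0r => ->.
  have hs : (size (map_poly (intr : int -> R) r) <= m)%N.
    rewrite size_map_inj_poly; [exact: ltnW | exact: intr_inj | exact: rmorph0].
  rewrite -/r (horner_coef_wide _ hs).
  by apply: eq_bigr => j _; rewrite coef_map.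
set A := \sum_(j < m) (r`_j)%:~R * (powK p q u j).1.1.
set B := \sum_(j < m) (r`_j)%:~R * (powK p q u j).1.2.
set C := \sum_(j < m) (r`_j)%:~R * (powK p q u j).2.
have eK : KeltT t (powK p q u k) = Kelt t A B C.
  rewrite KeltT_pow // -/x exk /Kelt /A /B /C !rmorph_sum /= !mulr_suml -!big_split /=.
  apply: eq_bigr => j _; rewrite -(@KeltT_pow R p q t u j ht) /KeltT /Kelt !rmorphM /= !ratr_int; ring.
have [eA eB eC] : [/\ (powK p q u k).1.1 = A, (powK p q u k).1.2 = B & (powK p q u k).2 = C].
  have : Kelt t ((powK p q u k).1.1 - A) ((powK p q u k).1.2 - B) ((powK p q u k).2 - C) = 0.
    by rewrite Kelt_sub -eK subrr.
  by case/(@kelt_uniq R p q t _ _ _ irr ht) => /eqP; rewrite subr_eq0 => /eqP -> /eqP; rewrite subr_eq0 => /eqP -> /eqP; rewrite subr_eq0 => /eqP ->.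
have -> : Nr p q u ^+ k = Nr p q (A, B, C).
  by rewrite -Nr_pow; case: (powK p q u k) eA eB eC => [[a0 b0] c0] /= -> -> ->.
set E : rat := (D1 * D2 * D3)%:R.
have -> : E ^+ 3 * Nr p q (A, B, C) = Nr p q (E * A, E * B, E * C).
  by rewrite /Nr; ring.
have hint : forall (f : nat -> rat) (Di : nat), (forall j, (j < m)%N -> Di%:R * f j \is a Num.int) ->
   (Di %| D1 * D2 * D3)%N -> E * (\sum_(j < m) (r`_j)%:~R * f j) \is a Num.int.
  move=> f Di Hf /dvdnP [z hz]; rewrite /E hz natrM mulr_sumr; apply: rpred_sum => j _.
  have -> : z%:R * Di%:R * ((r`_j)%:~R * f j) = z%:R * (r`_j)%:~R * (Di%:R * f j) :> rat by ring.
  by apply: rpredM; [apply: rpredM; [exact: natr_int | exact: intr_int] | exact: Hf (ltn_ord j)].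
apply: Nr_int.
- by apply: hint H1 _; rewrite -mulnA dvdn_mulr.
- by apply: hint H2 _; rewrite mulnAC dvdn_mull // dvdn_mulr.
- by apply: hint H3 _; rewrite dvdn_mull.
Qed.
Lemma sq_lt (R : realDomainType) (x y : R) : 0 <= x -> x < y -> x ^+ 2 < y ^+ 2.
Proof. move=> h1 h2; rewrite -subr_gt0 subr_sqr; apply: mulr_gt0; lra. Qed.

Lemma final_ineq (R : rcfType) (L S C e s2 : R) :
  0 < L -> 0 <= S -> 0 < C -> 0 < s2 -> s2 ^+ 2 = 2 ->
  (0 < L ^+ 2 + e -> S ^+ 2 = L ^+ 2 + e) -> e ^+ 2 * L ^+ 2 <= 5 * C ^+ 2 ->
  2 * (1 + s2) * C < L ^+ 3 ->
  0 < L ^+ 2 + e /\ `|L - S| < s2 * C / L ^+ 2.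
Proof.
move=> L0 S0 C0 s0 hs hS0 he hL.
have s1 : 1 < s2 by nra.
have k20 : 20 * C ^+ 2 < (L ^+ 3) ^+ 2.
  have h0 : 0 <= 2 * (1 + s2) * C by nra.
  have h1 : (2 * (1 + s2) * C) ^+ 2 < (L ^+ 3) ^+ 2.
    exact: sq_lt.
  have h2 : (2 * (1 + s2) * C) ^+ 2 = (12 + 8 * s2) * C ^+ 2.
    have -> : (2 * (1 + s2) * C) ^+ 2 = (4 + 8 * s2 + 4 * s2 ^+ 2) * C ^+ 2 by ring.
    by rewrite hs; ring.
  have C2 : 0 < C ^+ 2 by exact: exprn_gt0.
  have h3 : 20 * C ^+ 2 <= (12 + 8 * s2) * C ^+ 2 by rewrite ler_pM2r //; lra.
  lra.
have L2 : 0 < L ^+ 2 by exact: exprn_gt0.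
have e4 : 4 * e ^+ 2 < (L ^+ 2) ^+ 2.
  have : 4 * (e ^+ 2 * L ^+ 2) < (L ^+ 2) ^+ 2 * L ^+ 2.
    have -> : (L ^+ 2) ^+ 2 * L ^+ 2 = (L ^+ 3) ^+ 2 by ring.
    lra.
  rewrite mulrA => h; rewrite -(ltr_pM2r L2); exact: h.
have eb : 2 * `|e| < L ^+ 2.
  have : (2 * `|e|) ^+ 2 < (L ^+ 2) ^+ 2 by rewrite exprMn real_normK ?num_real //; lra.
  by rewrite ltr_pXn2r // ?nnegrE ?mulr_ge0 ?normr_ge0 // ltW.
have ep : 0 < L ^+ 2 + e by move: eb; case: (lerP 0 e) => h; [rewrite ger0_norm | rewrite ltr0_norm]; lra.
split => //.
have hS := hS0 ep.
have S2 : 2 * S ^+ 2 > L ^+ 2 by rewrite hS; move: eb; case: (lerP 0 e) => h; [rewrite ger0_norm | rewrite ltr0_norm]; lra.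
have S6 : 10 * S > 6 * L by nra.
have LS : 0 < L + S by lra.
have key : `|e| * L ^+ 2 < s2 * C * (L + S).
  have h1 : 0 <= `|e| * L ^+ 2 by rewrite mulr_ge0 ?normr_ge0 // ltW.
  have h2 : 0 <= s2 * C * (L + S) by rewrite !mulr_ge0 // ltW.
  suff : (`|e| * L ^+ 2) ^+ 2 < (s2 * C * (L + S)) ^+ 2 by rewrite ltr_pXn2r.
  rewrite !exprMn real_normK ?num_real // hs.
  have h3 : 5 * L ^+ 2 < 2 * (L + S) ^+ 2 by nra.
  have h4 : e ^+ 2 * (L ^+ 2) ^+ 2 <= 5 * C ^+ 2 * L ^+ 2.
    have -> : e ^+ 2 * (L ^+ 2) ^+ 2 = (e ^+ 2 * L ^+ 2) * L ^+ 2 by ring.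
    by rewrite ler_pM2r.
  have h5 : 5 * C ^+ 2 * L ^+ 2 < 2 * C ^+ 2 * (L + S) ^+ 2.
    have C2 : 0 < C ^+ 2 by exact: exprn_gt0.
    have -> : 5 * C ^+ 2 * L ^+ 2 = C ^+ 2 * (5 * L ^+ 2) by ring.
    have -> : 2 * C ^+ 2 * (L + S) ^+ 2 = C ^+ 2 * (2 * (L + S) ^+ 2) by ring.
    by rewrite ltr_pM2l.
  have -> : 2 * C ^+ 2 * (L + S) ^+ 2 = 2 * C ^+ 2 * (L + S) ^+ 2 by [].
  lra.
have eLS : `|L - S| * (L + S) = `|e|.
  have -> : e = - ((L - S) * (L + S)) by rewrite hS in S2 *; lra.
  by rewrite normrN normrM (gtr0_norm LS).
rewrite ltr_pdivlMr // -(ltr_pM2r LS).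
have -> : `|L - S| * L ^+ 2 * (L + S) = `|e| * L ^+ 2 by rewrite -eLS; ring.
exact: key.
Qed.
Lemma kelt_inj (R : rcfType) (p q : int) (t : R) (u v : trip) :
  irreducible_poly (cubic p q) -> t ^+ 3 - p%:~R * t - q%:~R = 0 ->
  KeltT t u = KeltT t v -> u = v.
Proof.
move=> irr ht; case: u => [[a b] c]; case: v => [[a' b'] c'] e; rewrite /KeltT /= in e.
have : Kelt t (a - a') (b - b') (c - c') = 0 by rewrite Kelt_sub e subrr.
case/(@kelt_uniq R p q t _ _ _ irr ht) => /eqP; rewrite subr_eq0 => /eqP ->.
by move=> /eqP; rewrite subr_eq0 => /eqP -> /eqP; rewrite subr_eq0 => /eqP ->.
Qed.

Lemma B_pos (R : rcfType) (p q : int) (t : R) :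
  irreducible_poly (cubic p q) -> t ^+ 3 - p%:~R * t - q%:~R = 0 ->
  (forall x : R, x ^+ 3 - p%:~R * x - q%:~R = 0 -> x = t) ->
  0 < 3 * t ^+ 2 - 4 * p%:~R.
Proof.
move=> irr ht hu; rewrite ltNge; apply/negP => hB.
set s := Num.sqrt (4 * p%:~R - 3 * t ^+ 2).
have hs : s ^+ 2 = 4 * p%:~R - 3 * t ^+ 2 by rewrite sqr_sqrtr //; lra.
have rt : forall r : R, r ^+ 2 + t * r + t ^+ 2 - p%:~R = 0 -> r ^+ 3 - p%:~R * r - q%:~R = 0.
  move=> r hr.
  have -> : r ^+ 3 - p%:~R * r - q%:~R =
    (r - t) * (r ^+ 2 + t * r + t ^+ 2 - p%:~R) + (t ^+ 3 - p%:~R * t - q%:~R) by ring.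
  by rewrite hr ht mulr0 addr0.
have q1 : ((- t + s) / 2) ^+ 2 + t * ((- t + s) / 2) + t ^+ 2 - p%:~R = 0.
  have -> : ((- t + s) / 2) ^+ 2 + t * ((- t + s) / 2) + t ^+ 2 - p%:~R =
    (s ^+ 2 - (4 * p%:~R - 3 * t ^+ 2)) / 4 by field.
  by rewrite hs subrr mul0r.
have q2 : ((- t - s) / 2) ^+ 2 + t * ((- t - s) / 2) + t ^+ 2 - p%:~R = 0.
  have -> : ((- t - s) / 2) ^+ 2 + t * ((- t - s) / 2) + t ^+ 2 - p%:~R =
    (s ^+ 2 - (4 * p%:~R - 3 * t ^+ 2)) / 4 by field.
  by rewrite hs subrr mul0r.
have e1 := hu _ (rt _ q1).
have e2 := hu _ (rt _ q2).
have t0 : t = 0.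
  lra.
have : Kelt t 0 1 0 = 0 by rewrite /Kelt t0 !rmorph0 rmorph1; ring.
by case/(@kelt_uniq R p q t _ _ _ irr ht) => _ /eqP; rewrite oner_eq0.
Qed.

Definition adjK (p q : int) (u : trip) : trip :=
  let P : rat := p%:~R in let Q : rat := q%:~R in
  let: (a, b, c) := u in
  (c^+2*P^+2 - b*c*Q - b^+2*P + 2*a*c*P + a^+2, c^+2*Q - a*b, - c^+2*P + b^+2 - a*c).

Lemma KeltT_adj (R : rcfType) (p q : int) (t : R) u :
  t ^+ 3 - p%:~R * t - q%:~R = 0 ->
  KeltT t (adjK p q u) = Qr p t u.
Proof.
move=> ht; case: u => [[a0 b0] c0]; rewrite /KeltT /Kelt /adjK /Qr /=.
apply/eqP; rewrite -subr_eq0; apply/eqP.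
set a := ratr a0; set b := ratr b0; set c := ratr c0.
set P : R := p%:~R; set Q : R := q%:~R.
transitivity ((t^+3 - P * t - Q) * (- c^+2 * t + b * c)).
  by rewrite /P /Q /a /b /c; field.
have h0 : t ^+ 3 - P * t - Q = 0 := ht.
by apply: (etrans (congr1 (fun z => z * _) h0)); apply: mul0r.
Qed.

Lemma key_ident (R : rcfType) (p : int) (t : R) (a b c : rat) :
  4 * (3 * t ^+ 2 - p%:~R) * Qr p t (a, b, c) - (3 * t ^+ 2 - 4 * p%:~R) *
    ((3 * t ^+ 2 - p%:~R) * ratr c - Kelt t a b c) ^+ 2 =
  (3 * ratr a * t + 2 * ratr b * p%:~R - 3 * ratr b * t ^+ 2 + ratr c * p%:~R * t) ^+ 2.
Proof. by rewrite /Qr /Kelt /=; field. Qed.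

Definition scaleK (s : rat) (u : trip) : trip := (s * u.1.1, s * u.1.2, s * u.2).

Lemma KeltT_scale (R : rcfType) (t : R) s u : KeltT t (scaleK s u) = ratr s * KeltT t u.
Proof. by rewrite /KeltT /Kelt /scaleK /= !rmorphM /=; ring. Qed.

Lemma Nr_one p q : Nr p q (1, 0, 0) = 1.
Proof. by rewrite /Nr; ring. Qed.

Lemma sq_le (R : realDomainType) (x y : R) : 0 <= x -> x <= y -> x ^+ 2 <= y ^+ 2.
Proof. move=> h1 h2; rewrite -subr_ge0 subr_sqr; apply: mulr_ge0; lra. Qed.
Theorem mainTheorem10 (R : rcfType) (p q : int) (theta : R) (d : nat)
    (lambda : R) (n : nat) (a b c : rat) :
  irreducible_poly (cubic p q) ->
  theta ^+ 3 - p%:~R * theta - q%:~R = 0 ->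
  (forall x : R, x ^+ 3 - p%:~R * x - q%:~R = 0 -> x = theta) ->
  (0 < d)%N ->
  (forall a' b' c' : rat, alg_integer (Kelt theta a' b' c') ->
     exists u v w : int,
       Kelt theta a' b' c' = (u%:~R + v%:~R * theta + w%:~R * theta ^+ 2) / d%:R) ->
  (exists a0 b0 c0 : rat, lambda = Kelt theta a0 b0 c0) ->
  alg_integer lambda -> alg_integer (lambda^-1) ->
  1 < lambda ->
  (0 < n)%N ->
  Kelt theta a b c = lambda ^+ n ->
  Num.sqrt lambda ^+ (3 * n) > 2 * (1 + Num.sqrt 2) * C1 p theta ->
  0 < c /\
  `| Num.sqrt lambda ^+ n
     - Num.sqrt (3 * theta ^+ 2 - p%:~R) * Num.sqrt (ratr c) |
    < Num.sqrt 2 * C1 p theta / lambda ^+ n.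
Proof.
move=> irr ht huniq _ _ [a0 [b0 [c0 hl]]] hint hinv l1 _ hn hL.
set l0 : trip := (a0, b0, c0).
have hl' : lambda = KeltT theta l0 by [].
have Bp := @B_pos R p q theta irr ht huniq.
have Ap : 0 < 3 * theta ^+ 2 - p%:~R.
  have := sqr_ge0 theta; lra.
set N := Nr p q l0.
have hN : ratr N = lambda * Qr p theta l0 by rewrite hl'; apply: (@Nr_Kelt R p q theta l0 ht).
have Qpos : 0 < Qr p theta l0.
  rewrite ltNge; apply/negP => hQ.
  move: hQ; rewrite /Qr /l0 /=.
  set X := (ratr a0 - _ + _); set Y := (ratr b0 - ratr c0 * theta) => hQ.
  have hY : Y = 0.
    have : 0 <= X ^+ 2 := sqr_ge0 X.
    have : 0 <= Y ^+ 2 := sqr_ge0 Y.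
    move=> h1 h2; apply/eqP; rewrite -sqrf_eq0 eq_le sqr_ge0 andbT.
    have : (3 * theta ^+ 2 - 4 * p%:~R) / 4 * Y ^+ 2 <= 0 by lra.
    by rewrite pmulr_rle0 // divr_gt0.
  have hbc : Kelt theta b0 (- c0) 0 = 0.
    by rewrite /Kelt rmorphN rmorph0; transitivity Y; [rewrite /Y; ring | exact: hY].
  case: (@kelt_uniq R p q theta _ _ _ irr ht hbc) => b00 /eqP; rewrite oppr_eq0 => /eqP c00 _.
  have hX : X = 0.
    apply/eqP; rewrite -sqrf_eq0 eq_le sqr_ge0 andbT.
    have : 0 <= (3 * theta ^+ 2 - 4 * p%:~R) / 4 * Y ^+ 2 by rewrite hY expr0n mulr0.
    lra.
  move: hX; rewrite /X b00 c00 !rmorph0 => ha.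
  have : lambda = 0 by rewrite hl /Kelt b00 c00 !rmorph0; move: ha; lra.
  lra.
have Npos : 0 < N by rewrite -(ltr0q R) hN mulr_gt0 //; lra.
have N0 : N != 0 by rewrite gt_eqF.
have l0n : lambda != 0 by rewrite gt_eqF //; lra.
set linv : trip := scaleK N^-1 (adjK p q l0).
have hlinv : KeltT theta linv = lambda^-1.
  rewrite KeltT_scale (@KeltT_adj R p q theta l0 ht).
  move: Qpos hN; set QQ := Qr p theta l0 => Qpos hN.
  rewrite fmorphV /= hN invfM -mulrA mulVf ?mulr1 //.
  by rewrite gt_eqF.
have hmul : mulK p q l0 linv = (1, 0, 0).
  apply: (@kelt_inj R p q theta _ _ irr ht).
  rewrite (@KeltT_mul R p q theta _ _ ht) hlinv -hl' mulfV //.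
  by rewrite /KeltT /Kelt /= !rmorph0 rmorph1; ring.
have NrL : Nr p q linv = N^-1.
  have := Nr_mul p q l0 linv; rewrite hmul Nr_one -/N => h.
  by apply: (mulfI N0); rewrite -h mulfV.
have [D1 [D10 HD1]] := @int_norm R p q theta l0 irr ht ltac:(by rewrite -hl').
have [D2 [D20 HD2]] := @int_norm R p q theta linv irr ht ltac:(by rewrite hlinv).
have NZ : N \is a Num.int.
  apply: (@bounded_den_int N (D1 ^ 3)); first by rewrite expn_gt0 D10.
  by move=> k; rewrite natrX; apply: HD1.
have NiZ : N^-1 \is a Num.int.
  apply: (@bounded_den_int N^-1 (D2 ^ 3)); first by rewrite expn_gt0 D20.
  by move=> k; rewrite natrX -NrL; apply: HD2.
have N1 : N = 1.
  move/intrP: NZ => [m hm]; move/intrP: NiZ => [m' hm'].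
  have mm : m * m' = 1.
    apply: (@intr_inj rat); rewrite rmorphM /= -hm -hm' mulfV //.
  have m0 : 0 < m by rewrite -(ltr0z rat) -hm.
  have m10 : (0 < m')%R by nia.
  have m1 : m = 1 by nia.
  by rewrite hm m1.
have hc : (a, b, c) = powK p q l0 n.
  apply: (@kelt_inj R p q theta _ _ irr ht).
  by rewrite (@KeltT_pow R p q theta l0 n ht) -hl' -hn.
have NA : Nr p q (a, b, c) = 1 by rewrite hc Nr_pow -/N N1 expr1n.
have ln0 : 0 < lambda ^+ n by apply: exprn_gt0; lra.
have QA : Qr p theta (a, b, c) = (lambda ^+ n)^-1.
  have := @Nr_Kelt R p q theta (a, b, c) ht; rewrite NA rmorph1.
  have hk : KeltT theta (a, b, c) = lambda ^+ n := hn.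
  rewrite hk => h.
  by apply: (mulfI (lt0r_neq0 ln0)); rewrite -h mulfV ?lt0r_neq0.
set A := 3 * theta ^+ 2 - p%:~R.
set B := 3 * theta ^+ 2 - 4 * p%:~R.
set e := A * ratr c - lambda ^+ n.
have hid := @key_ident R p theta a b c.
rewrite -/A -/B hn -/e QA in hid.
have eB : B * e ^+ 2 <= 4 * A * (lambda ^+ n)^-1.
  by rewrite -subr_ge0 hid sqr_ge0.
set C := C1 p theta.
set s2 := Num.sqrt 2.
have s20 : 0 < s2 by rewrite sqrtr_gt0.
have s22 : s2 ^+ 2 = 2 by rewrite sqr_sqrtr.
have Cs : s2 <= C by rewrite /C /C1 le_max lexx.
have Ct : s2 * `|theta| / Num.sqrt B <= C by rewrite /C /C1 le_max lexx orbT.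
have sB0 : 0 < Num.sqrt B by rewrite sqrtr_gt0.
have sB2 : Num.sqrt B ^+ 2 = B by rewrite sqr_sqrtr // ltW.
have C0 : 0 < C by lra.
have CC2 : 2 <= C ^+ 2 by rewrite -s22; apply: (@sq_le R) => //; exact: ltW.
have CB : 2 * theta ^+ 2 <= C ^+ 2 * B.
  move: Ct; rewrite ler_pdivrMr // => Ct.
  have h0 : 0 <= s2 * `|theta| by rewrite mulr_ge0 ?normr_ge0 ?ltW.
  have := @sq_le R _ _ h0 Ct.
  by rewrite !exprMn s22 real_normK ?num_real // sB2.
have e5 : e ^+ 2 * lambda ^+ n <= 5 * C ^+ 2.
  have h4 : 4 * A = B + 9 * theta ^+ 2 by rewrite /A /B; ring.
  have h1 : B * (e ^+ 2 * lambda ^+ n) <= 4 * A.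
    have h := eB; rewrite -(ler_pM2r ln0) in h.
    rewrite [X in _ <= X](_ : _ = 4 * A * (lambda ^+ n)^-1 * lambda ^+ n).
      by rewrite mulrA.
    by rewrite -mulrA mulVf ?mulr1 ?lt0r_neq0.
  have h3 : 2 * B <= C ^+ 2 * B by rewrite ler_pM2r.
  have h2 : 4 * A <= B * (5 * C ^+ 2).
    rewrite h4; have -> : B * (5 * C ^+ 2) = 5 * (C ^+ 2 * B) by ring.
    lra.
  by rewrite -(ler_pM2l Bp); exact: le_trans h1 h2.
set L := Num.sqrt lambda ^+ n.
have L2 : L ^+ 2 = lambda ^+ n.
  by rewrite /L -exprM mulnC exprM sqr_sqrtr //; lra.
have L3 : L ^+ 3 = Num.sqrt lambda ^+ (3 * n) by rewrite /L -exprM mulnC.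
have L0 : 0 < L by apply: exprn_gt0; rewrite sqrtr_gt0; lra.
have hS0 : 0 < L ^+ 2 + e -> (Num.sqrt A * Num.sqrt (ratr c)) ^+ 2 = L ^+ 2 + e.
  rewrite L2 /e addrC subrK => h.
  have hc0 : 0 < ratr c :> R by rewrite -(pmulr_rgt0 _ Ap).
  by rewrite exprMn !sqr_sqrtr ?ltW.
have he : e ^+ 2 * L ^+ 2 <= 5 * C ^+ 2 by rewrite L2.
have hL3 : 2 * (1 + s2) * C < L ^+ 3 by rewrite L3.
have [hp hf] := @final_ineq R L (Num.sqrt A * Num.sqrt (ratr c)) C e s2 L0
  (mulr_ge0 (sqrtr_ge0 _) (sqrtr_ge0 _)) C0 s20 s22 hS0 he hL3.
split; last by rewrite -L2.
move: hp; rewrite L2 /e addrC subrK pmulr_rgt0 //.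
by rewrite ltr0q.
Qed.
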